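(* Let $\{Y_x\}_{x\in\mathcal{X}}$ be a Gaussian process with prior mean $\mu_x$ and prior covariance $\sigma_{xx'}$. Let $\mathcal{D}\subset\mathcal{X}$ be a finite set of inputs with observed outputs $y_{\mathcal{D}}$, partitioned into pairwise disjoint sets $\mathcal{D}_1,\ldots,\mathcal{D}_M$ with $|\mathcal{D}_m|=|\mathcal{D}|/M$, and let $\mathcal{U}\subseteq\mathcal{X}\setminus\mathcal{D}$ be a finite set of test inputs partitioned into pairwise disjoint sets $\mathcal{U}_1,\ldots,\mathcal{U}_M$ with $|\mathcal{U}_m|=|\mathcal{U}|/M$. Let $\mathcal{S}\subset\mathcal{X}$ be a finite support set (common to all $M$ machines), and assume all matrix inverses below exist. For $\mathcal{B},\mathcal{B}'\subset\mathcal{X}$ and $m=1,\ldots,M$ define the local summary quantities $\dot{y}^m_{\mathcal{B}}\triangleq \Sigma_{\mathcal{B}\mathcal{D}_m}\Sigma^{-1}_{\mathcal{D}_m\mathcal{D}_m|\mathcal{S}}(y_{\mathcal{D}_m}-\mu_{\mathcal{D}_m})$ and $\dot{\Sigma}^m_{\mathcal{B}\mathcal{B}'}\triangleq \Sigma_{\mathcal{B}\mathcal{D}_m}\Sigma^{-1}_{\mathcal{D}_m\mathcal{D}_m|\mathcal{S}}\Sigma_{\mathcal{D}_m\mathcal{B}'}$, the global summary $\ddot{y}_{\mathcal{S}}\triangleq\sum_{m=1}^M\dot{y}^m_{\mathcal{S}}$ and $\ddot{\Sigma}_{\mathcal{S}\mathcal{S}}\triangleq\Sigma_{\mathcal{S}\mathcal{S}}+\sum_{m=1}^M\dot{\Sigma}^m_{\mathcal{S}\mathcal{S}}$,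 and $\Phi^m_{\mathcal{U}_m\mathcal{S}}\triangleq \Sigma_{\mathcal{U}_m\mathcal{S}}+\Sigma_{\mathcal{U}_m\mathcal{S}}\Sigma^{-1}_{\mathcal{S}\mathcal{S}}\dot{\Sigma}^m_{\mathcal{S}\mathcal{S}}-\dot{\Sigma}^m_{\mathcal{U}_m\mathcal{S}}$, with $\Phi^m_{\mathcal{S}\mathcal{U}_m}$ its transpose. Define the pPIC predictive mean and covariance blockwise by $$\widehat{\mu}^+_{\mathcal{U}_m}\triangleq\mu_{\mathcal{U}_m}+\left(\Phi^m_{\mathcal{U}_m\mathcal{S}}\ddot{\Sigma}^{-1}_{\mathcal{S}\mathcal{S}}\ddot{y}_{\mathcal{S}}-\Sigma_{\mathcal{U}_m\mathcal{S}}\Sigma^{-1}_{\mathcal{S}\mathcal{S}}\dot{y}^m_{\mathcal{S}}\right)+\dot{y}^m_{\mathcal{U}_m},$$ $$\widehat{\Sigma}^+_{\mathcal{U}_m\mathcal{U}_m}\triangleq\Sigma_{\mathcal{U}_m\mathcal{U}_m}-\left(\Phi^m_{\mathcal{U}_m\mathcal{S}}\Sigma^{-1}_{\mathcal{S}\mathcal{S}}\Sigma_{\mathcal{S}\mathcal{U}_m}-\Sigma_{\mathcal{U}_m\mathcal{S}}\Sigma^{-1}_{\mathcal{S}\mathcal{S}}\dot{\Sigma}^m_{\mathcal{S}\mathcal{U}_m}-\Phi^m_{\mathcal{U}_m\mathcal{S}}\ddot{\Sigma}^{-1}_{\mathcal{S}\mathcal{S}}\Phi^m_{\mathcal{S}\mathcal{U}_m}\right)-\dot{\Sigma}^m_{\mathcal{U}_m\mathcal{U}_m},$$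 and for $i\neq j$, $\widehat{\Sigma}^+_{\mathcal{U}_i\mathcal{U}_j}\triangleq\Sigma_{\mathcal{U}_i\mathcal{U}_j|\mathcal{S}}+\Phi^i_{\mathcal{U}_i\mathcal{S}}\ddot{\Sigma}^{-1}_{\mathcal{S}\mathcal{S}}\Phi^j_{\mathcal{S}\mathcal{U}_j}$; let $\widehat{\mu}^+_{\mathcal{U}}$ and $\widehat{\Sigma}^+_{\mathcal{U}\mathcal{U}}$ be the vector and matrix assembled from these blocks. Let the centralized PIC predictive distribution be $\mathcal{N}(\mu^{\mathrm{PIC}}_{\mathcal{U}|\mathcal{D}},\Sigma^{\mathrm{PIC}}_{\mathcal{U}\mathcal{U}|\mathcal{D}})$ with $$\mu^{\mathrm{PIC}}_{\mathcal{U}|\mathcal{D}}\triangleq\mu_{\mathcal{U}}+\widetilde{\Gamma}_{\mathcal{U}\mathcal{D}}(\Gamma_{\mathcal{D}\mathcal{D}}+\Lambda)^{-1}(y_{\mathcal{D}}-\mu_{\mathcal{D}}),\qquad \Sigma^{\mathrm{PIC}}_{\mathcal{U}\mathcal{U}|\mathcal{D}}\triangleq\Sigma_{\mathcal{U}\mathcal{U}}-\widetilde{\Gamma}_{\mathcal{U}\mathcal{D}}(\Gamma_{\mathcal{D}\mathcal{D}}+\Lambda)^{-1}\widetilde{\Gamma}_{\mathcal{D}\mathcal{U}},$$ where $\Gamma_{\mathcal{B}\mathcal{B}'}\triangleq\Sigma_{\mathcal{B}\mathcal{S}}\Sigma^{-1}_{\mathcal{S}\mathcal{S}}\Sigma_{\mathcal{S}\mathcal{B}'}$,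 $\Lambda$ is the block-diagonal matrix whose diagonal blocks are $\Sigma_{\mathcal{D}_m\mathcal{D}_m|\mathcal{S}}$ for $m=1,\ldots,M$, $\widetilde{\Gamma}_{\mathcal{U}\mathcal{D}}$ is the block matrix $(\widetilde{\Gamma}_{\mathcal{U}_i\mathcal{D}_m})_{i,m=1,\ldots,M}$ with $\widetilde{\Gamma}_{\mathcal{U}_i\mathcal{D}_m}=\Sigma_{\mathcal{U}_i\mathcal{D}_m}$ if $i=m$ and $\widetilde{\Gamma}_{\mathcal{U}_i\mathcal{D}_m}=\Gamma_{\mathcal{U}_i\mathcal{D}_m}$ otherwise, and $\widetilde{\Gamma}_{\mathcal{D}\mathcal{U}}$ is its transpose. Then $\widehat{\mu}^+_{\mathcal{U}}=\mu^{\mathrm{PIC}}_{\mathcal{U}|\mathcal{D}}$ and $\widehat{\Sigma}^+_{\mathcal{U}\mathcal{U}}=\Sigma^{\mathrm{PIC}}_{\mathcal{U}\mathcal{U}|\mathcal{D}}$.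
   Context: For finite sets $\mathcal{A},\mathcal{B}\subset\mathcal{X}$, $\mu_{\mathcal{A}}$ denotes the column vector of prior means $\mu_x$, $x\in\mathcal{A}$, and $\Sigma_{\mathcal{A}\mathcal{B}}$ the matrix of prior covariances $\sigma_{xx'}$, $x\in\mathcal{A}$, $x'\in\mathcal{B}$; $\Sigma_{\mathcal{B}\mathcal{A}}$ is the transpose of $\Sigma_{\mathcal{A}\mathcal{B}}$. The posterior covariance given $\mathcal{S}$ is $\Sigma_{\mathcal{A}\mathcal{B}|\mathcal{S}}\triangleq\Sigma_{\mathcal{A}\mathcal{B}}-\Sigma_{\mathcal{A}\mathcal{S}}\Sigma^{-1}_{\mathcal{S}\mathcal{S}}\Sigma_{\mathcal{S}\mathcal{B}}$. The vectors/matrices indexed by $\mathcal{D}$ and $\mathcal{U}$ are ordered consistently with the partitions $\mathcal{D}_1,\ldots,\mathcal{D}_M$ and $\mathcal{U}_1,\ldots,\mathcal{U}_M$. *)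

(* Defs.v *)
From HB Require Import structures.
From mathcomp Require Import all_boot all_order all_algebra.
Set Implicit Arguments. Unset Strict Implicit. Unset Printing Implicit Defensive.
Import Order.TTheory GRing.Theory Num.Theory.
Local Open Scope ring_scope.

Section Defs.
Variables (R : realFieldType) (X : Type).
Variables (mu : X -> R) (sigma : X -> X -> R).

(* Flat index k : 'I_(M*n) of a block-partitioned set <-> (block, offset),
   block-major order (the inverse of mxvec_index). *)
Definition blk {M n : nat} (k : 'I_(M * n)) : 'I_M * 'I_n :=
  enum_val (cast_ord (esym (@mxvec_cast M n)) k).

Definition flat {M n : nat} (f : 'I_M -> 'I_n -> X) : 'I_(M * n) -> X :=
  fun k => f (blk k).1 (blk k).2.

Definition muv {p} (A : 'I_p -> X) : 'cV[R]_p := \col_i mu (A i).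
Definition Sig {p q} (A : 'I_p -> X) (B : 'I_q -> X) : 'M[R]_(p, q) :=
  \matrix_(i, j) sigma (A i) (B j).

Definition condS {p q nS} (s : 'I_nS -> X) (A : 'I_p -> X) (B : 'I_q -> X) :=
  Sig A B - Sig A s *m invmx (Sig s s) *m Sig s B.

Definition Gam {p q nS} (s : 'I_nS -> X) (A : 'I_p -> X) (B : 'I_q -> X) :=
  Sig A s *m invmx (Sig s s) *m Sig s B.

Section Model.
Variables (M nD nU nS : nat).
Variables (d : 'I_M -> 'I_nD -> X) (u : 'I_M -> 'I_nU -> X) (s : 'I_nS -> X).
Variable (y : 'I_M -> 'I_nD -> R).

Definition yv (m : 'I_M) : 'cV[R]_nD := \col_l y m l.

Definition ydot {p} (m : 'I_M) (B : 'I_p -> X) : 'cV[R]_p :=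
  Sig B (d m) *m invmx (condS s (d m) (d m)) *m (yv m - muv (d m)).
Definition Sdot {p q} (m : 'I_M) (B : 'I_p -> X) (B' : 'I_q -> X) :=
  Sig B (d m) *m invmx (condS s (d m) (d m)) *m Sig (d m) B'.
Definition yddot : 'cV[R]_nS := \sum_(m < M) ydot m s.
Definition Sddot : 'M[R]_nS := Sig s s + \sum_(m < M) Sdot m s s.
Definition Phi (m : 'I_M) : 'M[R]_(nU, nS) :=
  Sig (u m) s + Sig (u m) s *m invmx (Sig s s) *m Sdot m s s - Sdot m (u m) s.

Definition muhat (m : 'I_M) : 'cV[R]_nU :=
  muv (u m) + (Phi m *m invmx Sddot *m yddot
               - Sig (u m) s *m invmx (Sig s s) *m ydot m s) + ydot m (u m).

Definition Sighat (i j : 'I_M) : 'M[R]_nU :=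
  if i == j then
    Sig (u i) (u i)
    - (Phi i *m invmx (Sig s s) *m Sig s (u i)
       - Sig (u i) s *m invmx (Sig s s) *m Sdot i s (u i)
       - Phi i *m invmx Sddot *m (Phi i)^T)
    - Sdot i (u i) (u i)
  else condS s (u i) (u j) + Phi i *m invmx Sddot *m (Phi j)^T.

Definition muhatU : 'cV[R]_(M * nU) :=
  \col_k muhat (blk k).1 (blk k).2 0.
Definition SighatU : 'M[R]_(M * nU) :=
  \matrix_(k, l) Sighat (blk k).1 (blk l).1 (blk k).2 (blk l).2.

Definition Dx := flat d.
Definition Ux := flat u.
Definition yD : 'cV[R]_(M * nD) := \col_k y (blk k).1 (blk k).2.

Definition Lambda : 'M[R]_(M * nD) :=
  \matrix_(k, l) if (blk k).1 == (blk l).1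
                 then condS s (d (blk k).1) (d (blk k).1) (blk k).2 (blk l).2
                 else 0.
Definition Gtilde : 'M[R]_(M * nU, M * nD) :=
  \matrix_(k, l) if (blk k).1 == (blk l).1 then Sig Ux Dx k l
                 else Gam s Ux Dx k l.

Definition muPIC : 'cV[R]_(M * nU) :=
  muv Ux + Gtilde *m invmx (Gam s Dx Dx + Lambda) *m (yD - muv Dx).
Definition SigPIC : 'M[R]_(M * nU) :=
  Sig Ux Ux - Gtilde *m invmx (Gam s Dx Dx + Lambda) *m Gtilde^T.
End Model.
End Defs.

Definition covariance_fun (R : realFieldType) (X : Type) (sigma : X -> X -> R) :=
  (forall x x', sigma x x' = sigma x' x) /\
  (forall (n : nat) (xs : 'I_n -> X) (c : 'I_n -> R),
      0 <= \sum_(i < n) \sum_(j < n) c i * c j * sigma (xs i) (xs j)).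

(* Main.v *)
Require Import Defs.
From HB Require Import structures.
From mathcomp Require Import all_boot all_order all_algebra.
Import Order.TTheory GRing.Theory Num.Theory.
Set Implicit Arguments. Unset Strict Implicit. Unset Printing Implicit Defensive.
Local Open Scope ring_scope.



Section Blocks.
Variables (R : realFieldType) (M : nat).

Definition unblk {n} (p : 'I_M * 'I_n) : 'I_(M*n) :=
  cast_ord (mxvec_cast M n) (enum_rank p).

Lemma unblkK n (p : 'I_M * 'I_n) : blk (unblk p) = p.
Proof. by rewrite /blk /unblk cast_ordK enum_rankK. Qed.

Lemma blkK n (k : 'I_(M*n)) : unblk (blk k) = k.
Proof. by rewrite /blk /unblk enum_valK cast_ordKV. Qed.

Definition E n (m : 'I_M) : 'M[R]_(M*n, n) :=
  \matrix_(k, l) ((blk k == (m, l))%:R).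
Arguments E {n} m.

Lemma sum_pick n (F : 'I_(M*n) -> R) (p : 'I_M * 'I_n) :
  \sum_k (blk k == p)%:R * F k = F (unblk p).
Proof.
rewrite (bigD1 (unblk p)) //= unblkK eqxx mul1r big1 ?addr0 // => k kp.
case: eqP => [e|]; last by rewrite mul0r.
by move: kp; rewrite -e blkK eqxx.
Qed.

Lemma mulEtA n q (A : 'M[R]_(M*n, q)) m :
  (E m)^T *m A = \matrix_(l, j) A (unblk (m,l)) j.
Proof.
apply/matrixP => l j; rewrite mxE [RHS]mxE.
transitivity (\sum_k (blk k == (m,l))%:R * A k j); last exact: sum_pick.
apply: eq_bigr => k _; by rewrite !mxE.
Qed.

Lemma mulAE n p (A : 'M[R]_(p, M*n)) m :
  A *m E m = \matrix_(j, l) A j (unblk (m,l)).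
Proof.
apply/matrixP => j l; rewrite mxE [RHS]mxE.
transitivity (\sum_k (blk k == (m,l))%:R * A j k); last exact: sum_pick.
apply: eq_bigr => k _; by rewrite !mxE mulrC.
Qed.

Lemma EtE n (m m' : 'I_M) :
  (E (n:=n) m)^T *m E m' = if m == m' then 1%:M else 0.
Proof.
rewrite mulEtA; apply/matrixP => l l'; rewrite !mxE unblkK xpair_eqE.
by case: (m == m'); rewrite !mxE.
Qed.

Lemma sumEEt n : \sum_m E (n:=n) m *m (E (n:=n) m)^T = 1%:M.
Proof.
apply/matrixP => k k'; rewrite summxE.
under eq_bigr => m _ do rewrite mxE.
rewrite pair_bigA /= (bigD1 (blk k)) //= big1.
  rewrite !mxE -!surjective_pairing eqxx mul1r addr0 [blk k' == _]eq_sym.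
  case: (k =P k') => [->|ne]; first by rewrite eqxx.
  case: eqP => // e; case: ne; first [exact: (can_inj (@blkK n) e) | exact: (esym (can_inj (@blkK n) e))].
move=> p pn; rewrite !mxE -!surjective_pairing.
by rewrite [blk k == p]eq_sym (negbTE pn) mul0r.
Qed.

Lemma sum_if (V : zmodType) (i : 'I_M) (f g : 'I_M -> V) :
  \sum_m (if i == m then f m else g m) = f i + (\sum_m g m - g i).
Proof.
rewrite (bigD1 i) //= eqxx (bigD1 i (P := predT)) //= [g i + _]addrC addrK.
congr (_ + _); apply: eq_bigr => m mi; by rewrite eq_sym (negbTE mi).
Qed.

Lemma sum_ifmul p q r (i : 'I_M) (f g : 'I_M -> 'M[R]_(p,q)) (h : 'I_M -> 'M[R]_(q,r)) :
  \sum_m (if i == m then f m else g m) *m h m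
  = f i *m h i + (\sum_m g m *m h m - g i *m h i).
Proof.
rewrite -(sum_if i (fun m => f m *m h m) (fun m => g m *m h m)); apply: eq_bigr => m _; by case: ifP.
Qed.

Lemma L1 n p q (C : 'I_M -> 'M[R]_(p, n)) (B : 'I_M -> 'M[R]_(n, q)) :
  (\sum_m C m *m (E (n:=n) m)^T) *m (\sum_m E (n:=n) m *m B m) = \sum_m C m *m B m.
Proof.
rewrite mulmx_suml; apply: eq_bigr => m _.
rewrite mulmx_sumr (bigD1 m) //= big1 ?addr0.
  by rewrite mulmxA -(mulmxA (C m)) EtE eqxx mulmx1.
move=> m' mm; rewrite mulmxA -(mulmxA (C m)) EtE eq_sym (negbTE mm).
by rewrite mulmx0 mul0mx.
Qed.

Lemma L2 n p q r (C : 'I_M -> 'M[R]_(p, n)) (B : 'I_M -> 'M[R]_(n, q))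
   (D : 'I_M -> 'M[R]_(q, r)) :
  (\sum_m C m *m (E (n:=n) m)^T) *m (\sum_m E (n:=n) m *m B m *m D m)
  = \sum_m C m *m B m *m D m.
Proof.
rewrite (eq_bigr (fun m => E m *m (B m *m D m))) => [|m _]; last by rewrite mulmxA.
rewrite L1; apply: eq_bigr => m _; by rewrite mulmxA.
Qed.

Lemma ext1 n q (A B : 'M[R]_(M*n, q)) :
  (forall i, (E (n:=n) i)^T *m A = (E (n:=n) i)^T *m B) -> A = B.
Proof.
move=> h; rewrite -(mul1mx A) -(mul1mx B) -sumEEt !mulmx_suml.
apply: eq_bigr => m _; by rewrite -!mulmxA h.
Qed.

Lemma ext2 n (A B : 'M[R]_(M*n, M*n)) :
  (forall i j, (E (n:=n) i)^T *m A *m E (n:=n) j = (E (n:=n) i)^T *m B *m E (n:=n) j) -> A = B.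
Proof.
move=> h; apply: ext1 => i.
rewrite -(mulmx1 (_ *m A)) -(mulmx1 (_ *m B)) -sumEEt !mulmx_sumr.
apply: eq_bigr => m _; by rewrite !mulmxA h.
Qed.

Lemma mulA1 n p (A : 'M[R]_(p, M*n)) : A = \sum_m (A *m E (n:=n) m) *m (E (n:=n) m)^T.
Proof.
rewrite -{1}(mulmx1 A) -sumEEt mulmx_sumr; apply: eq_bigr => m _; by rewrite mulmxA.
Qed.

Lemma mul1A n p (A : 'M[R]_(M*n, p)) : A = \sum_m E (n:=n) m *m ((E (n:=n) m)^T *m A).
Proof.
rewrite -{1}(mul1mx A) -sumEEt mulmx_suml; apply: eq_bigr => m _; by rewrite mulmxA.
Qed.

End Blocks.
Arguments E {R M n} m.


Section Gen.
Variables (R : realFieldType) (M : nat).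

Lemma EtAE n1 n2 (A : 'M[R]_(M*n1, M*n2)) i m :
  (E i)^T *m A *m E m = \matrix_(l, l') A (unblk (i,l)) (unblk (m,l')).
Proof. by rewrite mulAE mulEtA; apply/matrixP => l l'; rewrite !mxE. Qed.

Lemma blkdiagE n (L : 'I_M -> 'I_n -> 'I_n -> R) m m' :
  (E m)^T *m (\matrix_(k, l) if (blk k).1 == (blk l).1
      then L (blk k).1 (blk k).2 (blk l).2 else 0) *m E m'
  = if m == m' then \matrix_(a, b) L m a b else 0.
Proof.
rewrite EtAE; apply/matrixP => l l'; rewrite !mxE !unblkK /=.
by case: eqP => [->|]; rewrite !mxE.
Qed.

Lemma blkifE n1 n2 (A B : 'M[R]_(M*n1, M*n2)) i m :
  (E i)^T *m (\matrix_(k, l) if (blk k).1 == (blk l).1 then A k l else B k l) *m E m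
  = if i == m then (E i)^T *m A *m E m else (E i)^T *m B *m E m.
Proof.
rewrite !EtAE; apply/matrixP => l l'; rewrite !mxE !unblkK /=.
by case: eqP => _; rewrite !mxE.
Qed.

Lemma colblkE n (F : 'I_M -> 'cV[R]_n) i :
  (E i)^T *m (\col_k F (blk k).1 (blk k).2 0) = F i.
Proof.
rewrite mulEtA; apply/matrixP => l j; rewrite !mxE unblkK /=.
by rewrite (ord1 j).
Qed.

Lemma mxblkE n (F : 'I_M -> 'I_M -> 'M[R]_n) i j :
  (E i)^T *m (\matrix_(k, l) F (blk k).1 (blk l).1 (blk k).2 (blk l).2) *m E j
  = F i j.
Proof. by rewrite EtAE; apply/matrixP => l l'; rewrite !mxE !unblkK. Qed.

Lemma EtSum n p (B : 'I_M -> 'M[R]_(n,p)) i :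
  (E i)^T *m (\sum_m E m *m B m) = B i.
Proof.
rewrite mulmx_sumr (bigD1 i) //= big1 ?addr0.
  by rewrite mulmxA EtE eqxx mul1mx.
by move=> m mi; rewrite mulmxA EtE eq_sym (negbTE mi) mul0mx.
Qed.

Lemma SumE n p (C : 'I_M -> 'M[R]_(p,n)) j :
  (\sum_m C m *m (E m)^T) *m E j = C j.
Proof.
rewrite mulmx_suml (bigD1 j) //= big1 ?addr0.
  by rewrite -mulmxA EtE eqxx mulmx1.
by move=> m mi; rewrite -mulmxA EtE (negbTE mi) mulmx0.
Qed.

Lemma zm1 (V : zmodType) (c k t f : V) : c + (k - t) - (k - f) = f - t + c.
Proof. by rewrite opprB addrAC -addrA [X in _ + X]addrA subrK addrC. Qed.

Lemma zm2 (V : zmodType) (a p q y x : V) : a - (p - q - y + x) = a - (p - y - q) - x.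
Proof. by rewrite opprD addrA; congr (_ - _ - _); rewrite addrAC. Qed.
Lemma zm3 (V : zmodType) (a p w y x : V) : a - (p + y - x - w - y + x) = a - p + w.
Proof.
have -> : p + y - x - w - y + x = p - w.
  by rewrite addrAC (addrAC _ (- w)) subrK addrAC addrK.
by rewrite opprB addrCA [LHS]addrC.
Qed.
End Gen.


Section Model.
Variables (R : realFieldType) (X : Type) (mu : X -> R) (sigma : X -> X -> R)
  (M nD nU nS : nat) (d : 'I_M -> 'I_nD -> X) (u : 'I_M -> 'I_nU -> X)
  (s : 'I_nS -> X) (y : 'I_M -> 'I_nD -> R).
Hypothesis sym : forall x x', sigma x x' = sigma x' x.
Hypothesis Kunit : Sig sigma s s \in unitmx.
Hypothesis Cunit : forall m, condS sigma s (d m) (d m) \in unitmx.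
Hypothesis Wunit : Sddot sigma d s \in unitmx.

Local Notation Sg := (Sig sigma).
Local Notation K := (invmx (Sig sigma s s)).
Local Notation Lm m := (condS sigma s (d m) (d m)).
Local Notation iL m := (invmx (condS sigma s (d m) (d m))).
Local Notation W := (invmx (Sddot sigma d s)).
Local Notation Sd := (Sdot sigma d s).
Local Notation T := (\sum_m Sdot sigma d s m s s).
Local Notation r m := (yv y m - muv mu (d m)).

Lemma EtSig n q (f : 'I_M -> 'I_n -> X) (B : 'I_q -> X) i :
  (E i)^T *m Sg (flat f) B = Sg (f i) B.
Proof. by rewrite mulEtA; apply/matrixP => l j; rewrite !mxE /flat unblkK. Qed.

Lemma SigE n p (A : 'I_p -> X) (f : 'I_M -> 'I_n -> X) j :
  Sg A (flat f) *m E j = Sg A (f j).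
Proof. by rewrite mulAE; apply/matrixP => l j'; rewrite !mxE /flat unblkK. Qed.

Lemma Etmu n (f : 'I_M -> 'I_n -> X) i :
  (E i)^T *m muv mu (flat f) = muv mu (f i).
Proof. by rewrite mulEtA; apply/matrixP => l j; rewrite !mxE /flat unblkK. Qed.

Lemma EtyD i : (E i)^T *m (yD y - muv mu (Dx d)) = r i.
Proof.
rewrite mulmxBr Etmu mulEtA; congr (_ - _).
by apply/matrixP => l j; rewrite !mxE unblkK.
Qed.

Lemma trSig p q (A : 'I_p -> X) (B : 'I_q -> X) : (Sg A B)^T = Sg B A.
Proof. by apply/matrixP => i j; rewrite !mxE sym. Qed.

Lemma trK : K^T = K.
Proof. by rewrite trmx_inv trSig. Qed.

Lemma trcond p (A : 'I_p -> X) : (condS sigma s A A)^T = condS sigma s A A.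
Proof. by rewrite /condS raddfB /= !trmx_mul trK !trSig mulmxA. Qed.

Lemma triL m : (iL m)^T = iL m.
Proof. by rewrite trmx_inv trcond. Qed.

Lemma trSdot m p q (A : 'I_p -> X) (B : 'I_q -> X) : (Sd m A B)^T = Sd m B A.
Proof. by rewrite /Sdot !trmx_mul triL !trSig mulmxA. Qed.

Lemma trSddot : (Sddot sigma d s)^T = Sddot sigma d s.
Proof.
rewrite /Sddot raddfD /= trSig raddf_sum /=; congr (_ + _).
by apply: eq_bigr => m _; rewrite trSdot.
Qed.

Definition P : 'M[R]_(M*nD, nS) := \sum_m E m *m Sg (d m) s.
Definition Pt : 'M[R]_(nS, M*nD) := \sum_m Sg s (d m) *m (E m)^T.
Definition Li : 'M[R]_(M*nD) := \sum_m E m *m iL m *m (E m)^T.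
Definition rr : 'cV[R]_(M*nD) := \sum_m E m *m r m.

Lemma SigDs : Sg (Dx d) s = P.
Proof. by rewrite (mul1A (Sg (Dx d) s)); apply: eq_bigr => m _; rewrite EtSig. Qed.

Lemma SigsD : Sg s (Dx d) = Pt.
Proof. by rewrite (mulA1 (Sg s (Dx d))); apply: eq_bigr => m _; rewrite SigE. Qed.

Lemma yDE : yD y - muv mu (Dx d) = rr.
Proof. by rewrite (mul1A (yD y - _)); apply: eq_bigr => m _; rewrite EtyD. Qed.

Lemma LamE : Lambda sigma d s = \sum_m E m *m Lm m *m (E m)^T.
Proof.
apply: ext2 => i j.
transitivity (if i == j then \matrix_(a, b) Lm i a b else 0).
  exact: (blkdiagE (fun m a b => Lm m a b)).
rewrite -mulmxA SumE mulmxA EtE.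
case: eqP => [->|_]; last by rewrite mul0mx.
by rewrite mul1mx; apply/matrixP => a b; rewrite !mxE.
Qed.


Definition Gt i m : 'M[R]_(nU, nD) :=
  if i == m then Sg (u i) (d m) else Gam sigma s (u i) (d m).
Definition Gi i : 'M[R]_(nU, M*nD) := \sum_m Gt i m *m (E m)^T.

Lemma EtGam i m : (E i)^T *m Gam sigma s (Ux u) (Dx d) *m E m = Gam sigma s (u i) (d m).
Proof. by rewrite /Gam -!mulmxA SigE !mulmxA EtSig. Qed.

Lemma EtGt i m : (E i)^T *m Gtilde sigma d u s *m E m = Gt i m.
Proof.
rewrite /Gtilde.
transitivity (if i == m then (E i)^T *m Sg (Ux u) (Dx d) *m E m
              else (E i)^T *m Gam sigma s (Ux u) (Dx d) *m E m).
  exact: (blkifE (Sg (Ux u) (Dx d)) (Gam sigma s (Ux u) (Dx d)) i m).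
by rewrite EtSig SigE EtGam.
Qed.

Lemma EtG i : (E i)^T *m Gtilde sigma d u s = Gi i.
Proof. by rewrite (mulA1 (_ *m _)); apply: eq_bigr => m _; rewrite EtGt. Qed.

Lemma LamLi : Lambda sigma d s *m Li = 1%:M.
Proof.
rewrite LamE /Li L2 -(sumEEt R M nD); apply: eq_bigr => m _.
by rewrite -(mulmxA (E m)) mulmxV // mulmx1.
Qed.

Lemma PtLiP : Pt *m Li *m P = T.
Proof. by rewrite /Pt /Li /P L2 L1. Qed.

Lemma KTW p (Z : 'M[R]_(p, nS)) : Z *m K *m T *m W = Z *m K - Z *m W.
Proof.
have -> : T = Sddot sigma d s - Sg s s by rewrite /Sddot [Sg s s + _]addrC addrK.
rewrite mulmxBr mulmxBl -!mulmxA mulmxV // mulmx1 mulKmx //.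
Qed.

Hypothesis Aunit : Gam sigma s (Dx d) (Dx d) + Lambda sigma d s \in unitmx.

Lemma invE : invmx (Gam sigma s (Dx d) (Dx d) + Lambda sigma d s)
  = Li - Li *m P *m W *m Pt *m Li.
Proof.
set A := _ + _.
suff AB : A *m (Li - Li *m P *m W *m Pt *m Li) = 1%:M.
  by rewrite -[invmx A]mulmx1 -AB mulmxA mulVmx // mul1mx.
rewrite /A /Gam SigDs SigsD mulmxDl !mulmxBr !mulmxA LamLi !mul1mx.
have PLP q (Z : 'M[R]_(q, nS)) : Z *m Pt *m Li *m P = Z *m T by rewrite -PtLiP !mulmxA.
rewrite PLP KTW !mulmxBl.
by rewrite opprB [X in X + _]addrC subrK addrC subrK.
Qed.


Definition Z i : 'M[R]_(nU, nS) := \sum_m Gt i m *m iL m *m Sg (d m) s.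

Lemma GiLi i : Gi i *m Li = \sum_m Gt i m *m iL m *m (E m)^T.
Proof. by rewrite /Gi /Li L2. Qed.
Lemma GiLiP i : Gi i *m Li *m P = Z i.
Proof. by rewrite GiLi /P L1. Qed.
Lemma GiLirr i : Gi i *m Li *m rr = \sum_m Gt i m *m iL m *m r m.
Proof. by rewrite GiLi /rr L1. Qed.
Lemma PtLirr : Pt *m Li *m rr = yddot mu sigma d s y.
Proof. by rewrite /Pt /Li L2 /rr L1. Qed.

Lemma sumGt i p (h : 'I_M -> 'M[R]_(nD, p)) :
  \sum_m Gt i m *m h m = Sg (u i) (d i) *m h i
   + (Sg (u i) s *m K *m (\sum_m Sg s (d m) *m h m) - Gam sigma s (u i) (d i) *m h i).
Proof.
rewrite /Gt (sum_ifmul i (fun m => Sg (u i) (d m)) (fun m => Gam sigma s (u i) (d m)) h).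
congr (_ + (_ - _)); rewrite mulmx_sumr; apply: eq_bigr => m _.
by rewrite /Gam !mulmxA.
Qed.

Lemma Zphi i : Z i = Sg (u i) s *m K *m Sddot sigma d s - Phi sigma d u s i.
Proof.
rewrite /Z (eq_bigr (fun m => Gt i m *m (iL m *m Sg (d m) s))) => [|m _]; last by rewrite mulmxA.
rewrite sumGt /Sddot /Phi /Gam mulmxDr -(mulmxA _ K (Sg s s)) mulVmx // mulmx1.
rewrite /Sdot; under eq_bigr do rewrite mulmxA.
rewrite !mulmxA.
by rewrite opprB [RHS]addrCA [in RHS]opprD [in RHS]addrACA subrr add0r.
Qed.


Lemma mean_blk i : (E i)^T *m muPIC mu sigma d u s y = muhat mu sigma d u s y i.
Proof.
rewrite /muhat; move: (Phi sigma d u s i) (Zphi i) => F ZF.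
rewrite /muPIC mulmxDr Etmu !mulmxA EtG invE yDE.
rewrite mulmxBr mulmxBl !mulmxA GiLirr GiLiP.
have PLr q (Y : 'M[R]_(q, nS)) : Y *m Pt *m Li *m rr = Y *m yddot mu sigma d s y.
  by rewrite -PtLirr !mulmxA.
rewrite PLr ZF !mulmxBl -(mulmxA _ (Sddot sigma d s) W) mulmxV // mulmx1.
rewrite (eq_bigr (fun m => Gt i m *m (iL m *m r m))) => [|m _]; last by rewrite mulmxA.
rewrite sumGt /Gam /yddot /ydot.
under eq_bigr do rewrite mulmxA.
rewrite !mulmxA -[in RHS]addrA; congr (_ + _).
by rewrite zm1.
Qed.

Lemma trP : P^T = Pt.
Proof.
rewrite /P /Pt raddf_sum /=; apply: eq_bigr => m _; by rewrite trmx_mul trSig.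
Qed.

Lemma trLi : Li^T = Li.
Proof.
rewrite /Li raddf_sum /=; apply: eq_bigr => m _.
by rewrite !trmx_mul trmxK triL mulmxA.
Qed.

Lemma trGi j : (Gi j)^T = \sum_m E m *m (Gt j m)^T.
Proof.
rewrite /Gi raddf_sum /=; apply: eq_bigr => m _; by rewrite trmx_mul trmxK.
Qed.

Lemma ZT j : (Z j)^T = Sddot sigma d s *m K *m Sg s (u j) - (Phi sigma d u s j)^T.
Proof. by rewrite Zphi raddfB /= !trmx_mul trSddot trK trSig mulmxA. Qed.

Lemma PtLiGZ j : Pt *m Li *m (Gi j)^T = (Z j)^T.
Proof. by rewrite -GiLiP !trmx_mul trP trLi !mulmxA. Qed.

Lemma PtLiG j : \sum_m Sg s (d m) *m (iL m *m (Gt j m)^T) = (Z j)^T.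
Proof.
rewrite -PtLiGZ /Pt /Li L2 trGi L1; apply: eq_bigr => m _; by rewrite mulmxA.
Qed.

Lemma cov_common i j : (E i)^T *m SigPIC sigma d u s *m E j =
  Sg (u i) (u j) - (Phi sigma d u s i *m K *m Sg s (u j)
     - Phi sigma d u s i *m W *m (Phi sigma d u s j)^T
     - Gam sigma s (u i) (d i) *m (iL i *m (Gt j i)^T)
     + Sg (u i) (d i) *m (iL i *m (Gt j i)^T)).
Proof.
have Zi := Zphi i; have Zj := ZT j; have PG := PtLiG j.
move: (Phi sigma d u s i) (Phi sigma d u s j) Zi Zj PG => Fi Fj Zi Zj PG.
rewrite /SigPIC mulmxBr mulmxBl EtSig SigE.
have GT q (Y : 'M[R]_(q, M*nD)) : Y *m (Gtilde sigma d u s)^T *m E j = Y *m (Gi j)^T.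
  by rewrite -EtG trmx_mul trmxK mulmxA.
rewrite !mulmxA EtG GT invE mulmxBr mulmxBl !mulmxA GiLiP.
have PLG q (Y : 'M[R]_(q, nS)) : Y *m Pt *m Li *m (Gi j)^T = Y *m (Z j)^T.
  by rewrite -PtLiGZ !mulmxA.
rewrite PLG GiLi trGi L1.
rewrite (eq_bigr (fun m => Gt i m *m (iL m *m (Gt j m)^T))) => [|m _]; last by rewrite mulmxA.
rewrite sumGt PG Zi mulmxBl -(mulmxA _ (Sddot sigma d s) W) mulmxV // mulmx1.
have FWZ : Fi *m W *m (Z j)^T = Fi *m K *m Sg s (u j) - Fi *m W *m Fj^T.
  by rewrite Zj mulmxBr !mulmxA -(mulmxA Fi W (Sddot sigma d s)) mulVmx // mulmx1.
rewrite mulmxBl FWZ !mulmxA.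
by congr (_ - _); rewrite zm1.
Qed.

Lemma cov_blk i j : (E i)^T *m SigPIC sigma d u s *m E j = Sighat sigma d u s i j.
Proof.
rewrite cov_common /Sighat /Gt.
case: (eqVneq i j) => [<-|ne].
  by rewrite trSig /Sdot /Gam !mulmxA zm2.
have ne' : (j == i) = false by rewrite eq_sym (negbTE ne).
rewrite ?(negbTE ne) ?ne'.
have FK : Phi sigma d u s i *m K *m Sg s (u j) = Sg (u i) s *m K *m Sg s (u j)
   + Sg (u i) s *m K *m Sd i s s *m K *m Sg s (u j) - Sd i (u i) s *m K *m Sg s (u j).
  by rewrite /Phi !mulmxBl !mulmxDl.
rewrite FK /Gam !trmx_mul trK !trSig /Sdot /condS !mulmxA.
by rewrite zm3.
Qed.

End Model.

Theorem theorem2 (R : realFieldType) (X : Type)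
  (mu : X -> R) (sigma : X -> X -> R) (M nD nU nS : nat)
  (d : 'I_M -> 'I_nD -> X) (u : 'I_M -> 'I_nU -> X) (s : 'I_nS -> X)
  (y : 'I_M -> 'I_nD -> R) :
  covariance_fun sigma ->
  (forall m l m' l', d m l = d m' l' -> m = m' /\ l = l') ->
  (forall i a i' a', u i a = u i' a' -> i = i' /\ a = a') ->
  (forall i a m l, u i a <> d m l) ->
  injective s ->
  Sig sigma s s \in unitmx ->
  (forall m, condS sigma s (d m) (d m) \in unitmx) ->
  Sddot sigma d s \in unitmx ->
  (Gam sigma s (Dx d) (Dx d) + Lambda sigma d s) \in unitmx ->
  muhatU mu sigma d u s y = muPIC mu sigma d u s y /\
  SighatU sigma d u s = SigPIC sigma d u s.
Proof.
move=> [sym _] _ _ _ _ Ku Cu Wu Au; split.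
  apply: ext1 => i; rewrite mean_blk //.
  exact: (colblkE (fun m => muhat mu sigma d u s y m) i).
apply: ext2 => i j; rewrite cov_blk //.
exact: (mxblkE (fun a b => Sighat sigma d u s a b) i j).
Qed.
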